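(* For every $n\ge 1$ and every integer $k$ with $1\le k\le n$, every set $S=R\cup B$ of points in the plane in general position (no three collinear), colored red ($R$) and blue ($B$), with $|R|=|B|=n$, contains a balanced $2k$-hole.
   Context: A hole of $S$ is a simple polygon whose vertices are points of $S$ and whose interior contains no point of $S$ (not necessarily convex); a $2k$-hole has $2k$ vertices, and it is balanced if exactly $k$ of its vertices are red and $k$ are blue. *)

(* Defs.v *)
From mathcomp Require Import all_boot all_order all_algebra.
Set Implicit Arguments. Unset Strict Implicit. Unset Printing Implicit Defensive.
Import Order.TTheory GRing.Theory Num.Theory.
Local Open Scope ring_scope.

Section Geometry.
Variable R : realFieldType.
Definition point := (R * R)%type.

Definition det3 (a b c : point) : R :=
  (b.1 - a.1) * (c.2 - a.2) - (b.2 - a.2) * (c.1 - a.1).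

Definition collinear (a b c : point) : Prop := det3 a b c = 0.

Definition general_position (S : seq point) : Prop :=
  forall a b c, a \in S -> b \in S -> c \in S ->
    a != b -> b != c -> a != c -> ~ collinear a b c.

Definition on_segment (x a b : point) : Prop :=
  exists2 t : R, 0 <= t <= 1 &
    x = (a.1 + t * (b.1 - a.1), a.2 + t * (b.2 - a.2)).

Definition vtx (P : seq point) (i : nat) : point :=
  nth (0, 0) P (i %% size P).

(* A 2-gon (degenerate polygon, a segment)
   is accepted as the degenerate case of a "2-hole". *)
Definition simple_polygon (P : seq point) : Prop :=
  uniq P /\
  (size P = 2%N \/
   ((3 <= size P)%N /\
    forall i j, (i < size P)%N -> (j < size P)%N -> i != j ->
      if j == (i.+1 %% size P)%N then
        (forall x, on_segment x (vtx P i) (vtx P i.+1) ->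
                   on_segment x (vtx P j) (vtx P j.+1) -> x = vtx P j)
      else if i == (j.+1 %% size P)%N then
        (forall x, on_segment x (vtx P i) (vtx P i.+1) ->
                   on_segment x (vtx P j) (vtx P j.+1) -> x = vtx P i)
      else
        (forall x, on_segment x (vtx P i) (vtx P i.+1) ->
                   ~ on_segment x (vtx P j) (vtx P j.+1)))).

(* the edge [a,b] crosses the horizontal ray going right from q
   (half-open convention on the y-coordinates) *)
Definition crosses_ray (q a b : point) : bool :=
  ((a.2 > q.2) != (b.2 > q.2)) &&
  (q.1 < a.1 + (q.2 - a.2) * (b.1 - a.1) / (b.2 - a.2)).

(* q lies in the interior of the polygon P (q assumed off the boundary):
   even-odd (ray crossing) rule *)
Definition in_interior (P : seq point) (q : point) : bool :=
  odd (count (fun i => crosses_ray q (vtx P i) (vtx P i.+1)) (iota 0 (size P))).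

Definition is_hole (S P : seq point) : Prop :=
  simple_polygon P /\ {subset P <= S} /\
  forall q, q \in S -> q \notin P -> ~~ in_interior P q.

Definition balanced_hole (red blue : seq point) (k : nat) (P : seq point) : Prop :=
  [/\ size P = (2 * k)%N, is_hole (red ++ blue) P,
      count (mem red) P = k & count (mem blue) P = k].

End Geometry.

(* Main.v *)
Require Import Defs.
From mathcomp Require Import all_boot all_order all_algebra.
From mathcomp Require Import ring lra zify.
Import Order.TTheory GRing.Theory Num.Theory.
Set Implicit Arguments. Unset Strict Implicit. Unset Printing Implicit Defensive.

Lemma ivt (f : nat -> nat) N T :
  (forall i, i.+1 < N -> f i.+1 <= (f i).+1 /\ f i <= (f i.+1).+1) ->
  forall d a, a + d < N -> (f a <= T <= f (a + d)) || (f (a + d) <= T <= f a) ->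
  exists2 i, i < N & f i = T.
Proof.
move=> st; elim=> [|d IH] a ad.
  rewrite addn0 => h; exists a; [lia | move: h; lia].
move=> h.
case: (eqVneq (f a) T) => [e|ne]; first by exists a => //; lia.
have [s1 s2] := st a ltac:(lia).
apply: (IH a.+1); first lia.
rewrite addSnnS; move: h ne s1 s2; lia.
Qed.

Lemma count_take_rot1 (T : eqType) (a : pred T) (s : seq T) m :
  0 < m <= size s ->
  count a (take m (rot 1 s)) <= (count a (take m s)).+1 /\
  count a (take m s) <= (count a (take m (rot 1 s))).+1.
Proof.
case: s => [|x s] /=; first lia.
move=> /andP [m0 ms].
rewrite rot1_cons.
case: m m0 ms => [//|m] _ ms /=.
case: (ltnP m (size s)) => hm.
  rewrite -cats1 takel_cat; last lia.
  rewrite (take_nth x hm) -cats1 count_cat /=.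
  case: (a x); case: (a (nth x s m)); lia.
have e : m = size s by lia.
rewrite take_oversize ?size_rcons; last lia.
rewrite take_oversize; last lia.
rewrite -cats1 count_cat /=; case: (a x); lia.
Qed.

Lemma nth_rot (T : Type) (x0 : T) (s : seq T) i j : i <= size s -> j < size s ->
  nth x0 (rot i s) j = nth x0 s ((i + j) %% size s).
Proof.
move=> hi hj; rewrite /rot nth_cat size_drop.
case: (ltnP j (size s - i)) => h.
  rewrite nth_drop modn_small //; lia.
rewrite nth_take; last lia.
have -> : (i + j) %% size s = j - (size s - i).
  have -> : i + j = (j - (size s - i)) + size s by lia.
  rewrite modnDr modn_small //; lia.
by [].
Qed.

Lemma count_take_sum (T : Type) (x0 : T) (a : pred T) (s : seq T) m : m <= size s ->
  count a (take m s) = \sum_(j < m) a (nth x0 s j).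
Proof.
elim: m => [|m IH] hm; first by rewrite take0 big_ord0.
rewrite (take_nth x0); last lia.
by rewrite -cats1 count_cat IH ?big_ord_recr /= ?addn0; last lia.
Qed.

Lemma sum_windows (T : Type) (x0 : T) (a : pred T) (s : seq T) m : m <= size s ->
  \sum_(i < size s) count a (take m (rot i s)) = m * count a s.
Proof.
move=> ms.
transitivity (\sum_(i < size s) \sum_(j < m) (a (nth x0 s ((i + j) %% size s)) : nat)).
  apply: eq_bigr => i _; rewrite (count_take_sum x0); last by rewrite size_rot.
  apply: eq_bigr => j _; have := ltn_ord i; have := ltn_ord j; move=> hj hi.
  rewrite nth_rot //; lia.
rewrite exchange_big /=.
transitivity (\sum_(j < m) count a s); last by rewrite sum_nat_const card_ord.
apply: eq_bigr => j _.
have -> : count a s = count a (rot j s) by rewrite /rot count_cat addnC -count_cat cat_take_drop.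
have E := @count_take_sum _ x0 a (rot j s) (size s) ltac:(by rewrite size_rot).
rewrite take_oversize ?size_rot // in E; rewrite E.
apply: eq_bigr => i _; have := ltn_ord i; have := ltn_ord j; move=> hj hi.
rewrite nth_rot; [by rewrite (addnC j) | lia | lia].
Qed.

Local Open Scope ring_scope.

Section Basic.
Variable R : realFieldType.
Implicit Types a b c p q x y : point R.

Lemma det3_cyc a b c : det3 a b c = det3 b c a.
Proof. rewrite /det3; ring. Qed.
Lemma det3_swap a b c : det3 a c b = - det3 a b c.
Proof. rewrite /det3; ring. Qed.
Lemma det3_aff a b u v (t : R) :
  det3 a b (u.1 + t * (v.1 - u.1), u.2 + t * (v.2 - u.2)) =
  (1 - t) * det3 a b u + t * det3 a b v.
Proof. rewrite /det3 /=; ring. Qed.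
Lemma det3_aa a b : det3 a a b = 0.
Proof. rewrite /det3; ring. Qed.
Lemma det3_bb a b : det3 a b b = 0.
Proof. rewrite /det3; ring. Qed.
Lemma det3_ba a b : det3 a b a = 0.
Proof. rewrite /det3; ring. Qed.

Lemma crE q a b : crosses_ray q a b =
  ((q.2 < a.2) != (q.2 < b.2)) && (0 < (b.2 - a.2) * det3 a b q).
Proof.
rewrite /crosses_ray; case: ((q.2 < a.2) != (q.2 < b.2)) / idP => //= st.
have d0 : b.2 - a.2 != 0.
  apply/negP => /eqP h; have e : b.2 = a.2 by lra.
  by move: st; rewrite e eqxx.
have E : a.1 + (q.2 - a.2) * (b.1 - a.1) / (b.2 - a.2) - q.1 =
   det3 a b q / (b.2 - a.2).
  rewrite /det3; field; exact: d0.
rewrite -subr_gt0 E.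
case: (ltrgtP (b.2 - a.2) 0) => hd.
- rewrite -[in LHS](opprK (b.2 - a.2)) invrN mulrN -mulNr pmulr_lgt0 ?invr_gt0 ?oppr_gt0 //.
  rewrite -[in RHS](opprK (b.2 - a.2)) mulNr.
  by rewrite oppr_gt0 pmulr_rlt0 ?oppr_gt0.
- by rewrite pmulr_lgt0 ?invr_gt0 // pmulr_rgt0.
- by move: d0; rewrite hd eqxx.
Qed.

Lemma cr_sym q a b : crosses_ray q a b = crosses_ray q b a.
Proof.
rewrite !crE; congr andb; first by rewrite eq_sym.
by congr (0 < _); rewrite /det3; ring.
Qed.

Lemma L_pp (u v : R) : 0 < u * v -> 0 < u -> 0 < v.
Proof. by move=> h hu; rewrite -(pmulr_rgt0 _ hu). Qed.
Lemma L_pn (u v : R) : 0 < u * v -> u < 0 -> v < 0.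
Proof. move=> h hu; rewrite -oppr_gt0 -(pmulr_rgt0 _ (_ : 0 < -u)); first by rewrite mulrNN.
by rewrite oppr_gt0. Qed.
Lemma L_np (u v : R) : u * v <= 0 -> 0 < u -> v <= 0.
Proof. move=> h hu; rewrite leNgt; apply/negP => hv. have := mulr_gt0 hu hv. lra. Qed.
Lemma L_nn (u v : R) : u * v <= 0 -> u < 0 -> 0 <= v.
Proof. move=> h hu; rewrite leNgt; apply/negP => hv. have := mulr_gt0 (_ : 0 < -u) (_ : 0 < -v).
rewrite mulrNN. move=> /(_ ltac:(lra) ltac:(lra)). lra. Qed.

Ltac sg H := first [ have ? := L_pp H ltac:(lra) | have ? := L_pn H ltac:(lra)
  | have ? := L_np H ltac:(lra) | have ? := L_nn H ltac:(lra) | idtac ].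

Lemma tri_odd q a b c : 0 < det3 a b c ->
  odd (crosses_ray q a b + crosses_ray q b c + crosses_ray q c a) ->
  [/\ 0 <= det3 a b q, 0 <= det3 b c q & 0 <= det3 c a q].
Proof.
move=> D.
have h1 : det3 a b q + det3 b c q + det3 c a q = det3 a b c.
  rewrite /det3; ring.
have h2 : det3 b c q * (a.2 - q.2) + det3 c a q * (b.2 - q.2)
          + det3 a b q * (c.2 - q.2) = 0.
  rewrite /det3; ring.
rewrite !crE.
move: h1 h2 D.
set x := det3 a b q; set y := det3 b c q; set z := det3 c a q; set d := det3 a b c.
move=> h1 h2 D.
case: (ltrP q.2 a.2) => ha; case: (ltrP q.2 b.2) => hb; case: (ltrP q.2 c.2) => hc => //=;
  rewrite ?addn0 ?add0n;
  case: (ltrP 0 ((b.2 - a.2) * x)) => hx;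
  case: (ltrP 0 ((c.2 - b.2) * y)) => hy;
  case: (ltrP 0 ((a.2 - c.2) * z)) => hz => //= _; sg hx; sg hy; sg hz; split; nra.
Qed.

End Basic.


Section Fan.
Variable R : realFieldType.
Implicit Types a b c p q x y : point R.

Lemma segP x a b : on_segment x a b ->
  exists2 t : R, 0 <= t <= 1 &
   (x = (a.1 + t * (b.1 - a.1), a.2 + t * (b.2 - a.2))) /\
   forall c d, det3 c d x = (1 - t) * det3 c d a + t * det3 c d b.
Proof. case=> t ht ->; exists t => //; split => // c d; exact: det3_aff. Qed.

Lemma adj a b c x : det3 a b c != 0 -> on_segment x a b -> on_segment x b c -> x = b.
Proof.
move=> D /segP [t ht [ex hx]] /segP [s hs [ey hy]].
have := hx a b; rewrite det3_ba det3_bb !mulr0 addr0 => h0.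
have := hy a b; rewrite h0 det3_bb mulr0 add0r => /esym/eqP; rewrite mulf_eq0 (negbTE D) orbF.
by move/eqP => s0; rewrite ey s0 !mul0r !addr0 -surjective_pairing.
Qed.

Lemma chain_wedge p a b x : 0 < det3 p a b -> on_segment x a b ->
  [/\ x != p, 0 <= det3 p a x & 0 <= det3 p x b].
Proof.
move=> D /segP [t /andP [t0 t1] [ex hx]].
have e1 : det3 p a x = t * det3 p a b by rewrite hx det3_bb mulr0 add0r.
have e2 : det3 p x b = (1 - t) * det3 p a b.
  by rewrite det3_swap hx det3_bb (det3_swap p b a); ring.
split.
- apply/eqP => xp. move: e1 e2; rewrite xp det3_ba det3_aa. nra.
- rewrite e1; nra.
- rewrite e2; nra.
Qed.

Definition law (be : point R -> R) p := forall x y, x != p -> y != p ->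
  (be x < be y -> ((0 < det3 p x y) = (be y - be x < 2)) /\
                  ((det3 p x y < 0) = (2 < be y - be x))) /\
  (be x = be y -> det3 p x y = 0).

Section Law.
Variables (be : point R -> R) (p : point R).
Hypothesis L : law be p.

Lemma wedge a b x : a != p -> b != p -> x != p -> be a < be b -> 0 < det3 p a b ->
  0 <= det3 p a x -> 0 <= det3 p x b -> be a <= be x <= be b.
Proof.
move=> ap bp xp ab D h1 h2.
have [Lab1 Lab2] := (L ap bp).1 ab.
have dab : be b - be a < 2 by rewrite -Lab1.
apply/andP; split.
  rewrite leNgt; apply/negP => xa.
  have [L1 _] := (L xp ap).1 xa.
  have [_ M2] := (L xp bp).1 (lt_trans xa ab).
  have n1 : ~~ (0 < det3 p x a) by rewrite det3_swap; lra.
  rewrite L1 in n1.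
  have : 2 < be b - be x by lra.
  rewrite -M2; lra.
rewrite leNgt; apply/negP => bx.
have [L1 _] := (L bp xp).1 bx.
have [_ M2] := (L ap xp).1 (lt_trans ab bx).
have n1 : ~~ (0 < det3 p b x) by rewrite det3_swap; lra.
rewrite L1 in n1.
have : 2 < be x - be a by lra.
rewrite -M2; lra.
Qed.

Lemma chain_disj a b c d x : a != p -> b != p -> c != p -> d != p ->
  be a < be b -> 0 < det3 p a b -> be c < be d -> 0 < det3 p c d -> be b < be c ->
  on_segment x a b -> on_segment x c d -> False.
Proof.
move=> ap bp cp dp ab Dab cd Dcd bc s1 s2.
have [xp h1 h2] := chain_wedge Dab s1.
have [_ h3 h4] := chain_wedge Dcd s2.
have /andP[_ w1] := wedge ap bp xp ab Dab h1 h2.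
have /andP[w2 _] := wedge cp dp xp cd Dcd h3 h4.
lra.
Qed.

Lemma spoke_first a b c d x : a != p -> b != p -> c != p -> d != p ->
  be a < be b -> be b <= be c -> be c < be d -> 0 < det3 p a b -> 0 < det3 p c d ->
  on_segment x p a -> on_segment x c d -> False.
Proof.
move=> ap bp cp dp ab bc cd Dab Dcd s1 s2.
have [xp h3 h4] := chain_wedge Dcd s2.
have /andP[w2 _] := wedge cp dp xp cd Dcd h3 h4.
have [t /andP[t0 t1] [ex hx]] := segP s1.
have t0' : t != 0.
  apply/eqP => t0'; move: xp; rewrite ex t0' !mul0r !addr0 -surjective_pairing eqxx //.
have e1 : det3 p b x = - (t * det3 p a b).
  by rewrite hx det3_ba mulr0 add0r (det3_swap p a b) mulrN.
have e2 : det3 p a x = 0 by rewrite hx det3_ba det3_bb !mulr0 addr0.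
have neg : det3 p b x < 0.
  rewrite e1 oppr_lt0; apply: mulr_gt0 => //; rewrite lt_neqAle eq_sym t0' t0 //.
have ax : be a < be x by lra.
have [A1 A2] := (L ap xp).1 ax.
have n1 : ~~ (be x - be a < 2) by rewrite -A1 e2 ltxx.
have n2 : ~~ (2 < be x - be a) by rewrite -A2 e2 ltxx.
case: (ltrP (be b) (be x)) => bx.
  have [_ B2] := (L bp xp).1 bx.
  move: neg; rewrite B2; lra.
have ebx : be b = be x by lra.
have := (L bp xp).2 ebx; lra.
Qed.

Lemma spoke_last r q c d x : r != p -> q != p -> c != p -> d != p ->
  be c < be d -> be d <= be r -> be r < be q -> 0 < det3 p r q -> 0 < det3 p c d ->
  on_segment x q p -> on_segment x c d -> False.
Proof.
move=> rp qp cp dp cd dr rq Drq Dcd s1 s2.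
have [xp h3 h4] := chain_wedge Dcd s2.
have /andP[_ w2] := wedge cp dp xp cd Dcd h3 h4.
have [t /andP[t0 t1] [ex hx]] := segP s1.
have t1' : t != 1.
  apply/eqP => t1'; move: xp; rewrite ex t1' !mul1r.
  have -> : q.1 + (p.1 - q.1) = p.1 by ring.
  have -> : q.2 + (p.2 - q.2) = p.2 by ring.
  by rewrite -surjective_pairing eqxx.
have e1 : det3 p r x = (1 - t) * det3 p r q by rewrite hx det3_ba mulr0 addr0.
have e2 : det3 p q x = 0 by rewrite hx det3_ba det3_bb !mulr0 addr0.
have pos : 0 < det3 p r x.
  rewrite e1; apply: mulr_gt0 => //; rewrite subr_gt0 lt_neqAle t1' t1 //.
case: (ltrP (be x) (be r)) => xr.
  have [_ X2] := (L xp rp).1 xr.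
  have h : 2 < be r - be x by rewrite -X2 det3_swap oppr_lt0.
  have xq : be x < be q by lra.
  have [Q1 Q2] := (L xp qp).1 xq.
  have : ~~ (2 < be q - be x) by rewrite -Q2 det3_swap e2 oppr0 ltxx.
  lra.
have ebx : be x = be r by lra.
have := (L xp rp).2 ebx; rewrite det3_swap; lra.
Qed.
End Law.
End Fan.


Section Poly.
Variable R : realFieldType.
Implicit Types a b c p q x y : point R.

Lemma vtx_mod (P : seq (point R)) k : vtx P (k %% size P)%N = vtx P k.
Proof. by rewrite /vtx modn_mod. Qed.
Lemma vtx_modS (P : seq (point R)) k : vtx P (k %% size P)%N.+1 = vtx P k.+1.
Proof. by rewrite /vtx -addn1 modnDml addn1. Qed.

Lemma gp_det S a b c : general_position S -> a \in S -> b \in S -> c \in S ->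
  a != b -> b != c -> a != c -> det3 a b c != 0.
Proof. by move=> G aS bS cS ab bc ac; apply/eqP; apply: (G a b c). Qed.

Lemma adj_gen S (P : seq (point R)) i x : general_position S -> {subset P <= S} ->
  uniq P -> (3 <= size P)%N ->
  on_segment x (vtx P i) (vtx P i.+1) -> on_segment x (vtx P i.+1) (vtx P i.+2) ->
  x = vtx P i.+1.
Proof.
move=> G sub U s3 h1 h2; apply: adj h1 h2.
have s0 : (0 < size P)%N by lia.
have mem k : vtx P k \in S by apply: sub; rewrite /vtx mem_nth // ltn_pmod.
have neq k l : (k %% size P != l %% size P)%N -> vtx P k != vtx P l.
  move=> kl; rewrite /vtx nth_uniq ?ltn_pmod //.
have m1 : (1 %% size P = 1)%N by rewrite modn_small //; lia.
have m2 : (2 %% size P = 2)%N by rewrite modn_small //; lia.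
have m0 : (0 %% size P = 0)%N by rewrite mod0n.
apply: gp_det G (mem _) (mem _) (mem _) _ _ _; apply: neq.
- by rewrite -(addn1 i) -{1}(addn0 i) eqn_modDl m0 m1.
- by rewrite -(addn2 i) -(addn1 i) eqn_modDl m1 m2.
- by rewrite -(addn2 i) -{1}(addn0 i) eqn_modDl m0 m2.
Qed.

Section FanP.
Variables (be : point R -> R) (p : point R) (Q S : seq (point R)).
Hypotheses (Hm : (2 <= size Q)%N) (Hu : uniq (p :: Q)) (HS : {subset p :: Q <= S})
  (Hgp : general_position S) (L : law be p)
  (Hmono : forall i j, (i < j < size Q)%N -> be (nth p Q i) < be (nth p Q j))
  (Hccw : forall i, (i.+1 < size Q)%N -> 0 < det3 p (nth p Q i) (nth p Q i.+1)).

Let m := size Q.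
Let P := p :: Q.

Lemma qnp i : (i < m)%N -> nth p Q i != p.
Proof. move=> im; apply/eqP => e; move: Hu => /= /andP [pQ _].
by move: pQ; rewrite -{1}e mem_nth. Qed.

Lemma vtx0 : vtx P 0 = p. Proof. by rewrite /vtx mod0n. Qed.
Lemma vtxS i : (i < m)%N -> vtx P i.+1 = nth p Q i.
Proof. move=> im; rewrite /vtx /= modn_small; last by rewrite ltnS.
by apply: set_nth_default. Qed.
Lemma vtxm : vtx P m.+1 = p. Proof. by rewrite /vtx /= modnn. Qed.

Lemma monole i j : (i <= j < m)%N -> be (nth p Q i) <= be (nth p Q j).
Proof.
case/andP; rewrite leq_eqVlt => /orP [/eqP -> //| ij] jm.
by apply: ltW; apply: Hmono; rewrite ij.
Qed.

Lemma fan_NA i j x : (i < j <= m)%N -> j != i.+1 -> ~~ ((i == 0%N) && (j == m)) ->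
  on_segment x (vtx P i) (vtx P i.+1) -> ~ on_segment x (vtx P j) (vtx P j.+1).
Proof.
move=> /andP [ij jm] nj nij s1 s2.
case: i ij nj nij s1 => [|i'] ij nj nij s1.
  case: j ij jm nj nij s2 => [//|j'] ij jm nj nij s2.
  have j'm : (j'.+1 < m)%N by move: nij; rewrite /= => /negP; lia.
  rewrite vtx0 vtxS in s1; last by lia.
  rewrite vtxS ?vtxS in s2; try lia.
  apply: (spoke_first L (a := nth p Q 0) (b := nth p Q 1) (c := nth p Q j') (d := nth p Q j'.+1)) s1 s2;
    try (apply: qnp; lia).
  - by apply: Hmono; lia.
  - by apply: monole; lia.
  - by apply: Hmono; lia.
  - by apply: Hccw; lia.
  - by apply: Hccw; lia.
case: j ij jm nj nij s2 => [//|j'] ij jm nj nij s2.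
rewrite vtxS ?vtxS in s1; try lia.
case: (ltnP j'.+1 m) => j'm.
  rewrite vtxS ?vtxS in s2; try lia.
  apply: (chain_disj L (a := nth p Q i') (b := nth p Q i'.+1) (c := nth p Q j') (d := nth p Q j'.+1)) s1 s2;
    try (apply: qnp; lia); try (apply: Hmono; lia); try (apply: Hccw; lia).
have ej : j' = m.-1 by lia.
rewrite ej vtxS in s2; last by lia.
have e2 : (m.-1).+2 = m.+1 by lia.
rewrite e2 vtxm in s2.
apply: (spoke_last L (r := nth p Q m.-2) (q := nth p Q m.-1) (c := nth p Q i') (d := nth p Q i'.+1)) s2 s1;
    try (apply: qnp; lia); try (apply: Hmono; lia); try (apply: Hccw; lia); try (apply: monole; lia).
have -> : m.-1 = (m.-2).+1 by lia.
apply: Hccw; lia.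
Qed.


Lemma fan_simple : simple_polygon P.
Proof.
split => //; right; split; first by rewrite /=; lia.
move=> i j hi hj hij.
case: ifP => [/eqP ej | nj].
  move=> x h1 h2; rewrite ej in h2 *; rewrite vtx_mod vtx_modS in h2 *.
  apply: (adj_gen Hgp HS Hu _ h1 h2); rewrite /=; lia.
case: ifP => [/eqP ei | ni].
  move=> x h1 h2; rewrite ei in h1 *; rewrite vtx_mod vtx_modS in h1 *.
  apply: (adj_gen Hgp HS Hu _ h2 h1); rewrite /=; lia.
wlog: i j hi hj hij nj ni / (i < j)%N.
  move=> W; case: (ltnP i j) => ij; first exact: W.
  move=> x h1 h2.
  have ji : (j < i)%N by move: hij; rewrite neq_ltn; lia.
  have hji : j != i by rewrite eq_sym.
  exact: (W j i hj hi hji ni nj ji x h2 h1).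
move=> ij x h1; apply: (fan_NA (i := i) (j := j)) => //.
- apply/andP; split => //; move: hj; rewrite /= /m; lia.
- apply/negP => /eqP e; move: nj; rewrite e modn_small ?eqxx //; move: hj; rewrite /=; lia.
- apply/negP => /andP [/eqP i0 /eqP jm]; move: ni; rewrite i0 jm /= modnn //.
Qed.

Lemma fan_even s0 : (forall i, (i.+1 < m)%N -> ~ [/\ 0 <= det3 p (nth p Q i) s0,
     0 <= det3 (nth p Q i) (nth p Q i.+1) s0 & 0 <= det3 (nth p Q i.+1) p s0]) ->
  ~~ in_interior P s0.
Proof.
move=> Hemp.
rewrite /in_interior.
set f := fun i => crosses_ray s0 (vtx P i) (vtx P i.+1).
have cS j : count f (iota 0 j.+1) = (count f (iota 0 j) + f j)%N.
  by rewrite -addn1 iotaD count_cat /= addn0.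
have tri t : (t.+1 < m)%N -> ~~ (crosses_ray s0 p (nth p Q t) (+)
    crosses_ray s0 (nth p Q t) (nth p Q t.+1) (+) crosses_ray s0 (nth p Q t.+1) p).
  move=> tm; apply/negP => od; apply: (Hemp t tm); apply: tri_odd (Hccw tm) _.
  by rewrite !oddD !oddb.
have F j : (1 <= j <= m)%N ->
    ~~ (odd (count f (iota 0 j)) (+) crosses_ray s0 (nth p Q j.-1) p).
  elim: j => [//|j IH] /andP [_ jm].
  case: j IH jm => [|j] IH jm.
    have h0 : (0 < m)%N by lia.
    by rewrite /= /f vtx0 (vtxS h0) (cr_sym s0 p); case: (crosses_ray _ _ _).
  have h1 : (j < m)%N by lia.
  have h2 : (j.+1 < m)%N by lia.
  rewrite cS oddD oddb /f (vtxS h1) (vtxS h2).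
  have := IH ltac:(lia); rewrite /=.
  have := tri j ltac:(lia).
  rewrite (cr_sym s0 p).
  by case: (odd _); case: (crosses_ray _ _ _); case: (crosses_ray _ _ _); case: (crosses_ray _ _ _).
have := F m ltac:(lia).
have -> : size P = m.+1 by [].
rewrite cS oddD oddb /f.
have -> : vtx P m = nth p Q m.-1.
  by rewrite -vtxS; [rewrite prednK //; lia | lia].
by rewrite vtxm; case: (odd _); case: (crosses_ray _ _ _).
Qed.
End FanP.
End Poly.

Section Wrap.
Variable R : realFieldType.
Lemma fan_hole (be : point R -> R) (p : point R) (Q S : seq (point R)) :
  (2 <= size Q)%N -> uniq (p :: Q) -> {subset p :: Q <= S} -> general_position S ->
  law be p ->
  (forall i j, (i < j < size Q)%N -> be (nth p Q i) < be (nth p Q j)) ->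
  (forall i, (i.+1 < size Q)%N -> 0 < det3 p (nth p Q i) (nth p Q i.+1)) ->
  (forall s0, s0 \in S -> s0 \notin p :: Q -> forall i, (i.+1 < size Q)%N ->
     ~ [/\ 0 <= det3 p (nth p Q i) s0, 0 <= det3 (nth p Q i) (nth p Q i.+1) s0
         & 0 <= det3 (nth p Q i.+1) p s0]) ->
  is_hole S (p :: Q).
Proof.
move=> Hm Hu HS Hg L Hmo Hcc He; split; first exact: (fan_simple Hm Hu HS Hg L Hmo Hcc).
split => // s0 s0S s0n; exact: (fan_even Hm Hu Hcc (He s0 s0S s0n)).
Qed.
End Wrap.


Section Ang.
Variable R : realFieldType.
Implicit Types a b c p q x y : point R.
Implicit Types X Y : R.

Definition upR X Y : bool := (0 < Y) || ((Y == 0) && (0 < X)).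
Definition tR X Y : R := X / (`|X| + `|Y|).
Definition angR X Y : R := if upR X Y then 1 - tR X Y else 3 + tR X Y.

Lemma nrm_gt0 X Y : (X != 0) || (Y != 0) -> 0 < `|X| + `|Y|.
Proof.
case/orP => h.
  by apply: ltr_wpDr; [exact: normr_ge0 | rewrite normr_gt0].
by apply: ltr_wpDl; [exact: normr_ge0 | rewrite normr_gt0].
Qed.

Ltac sgc X h := case: (ltrgtP X 0) => h;
  [rewrite ?(ltr0_norm h) ?(lt_gtF h) ?(lt_eqF h)
  | rewrite ?(gtr0_norm h) ?h ?(gt_eqF h)
  | subst X; rewrite ?normr0 ?ltxx ?eqxx].

Lemma t_bounds X Y : (X != 0) || (Y != 0) ->
  (upR X Y -> -1 < tR X Y <= 1) /\ (~~ upR X Y -> -1 <= tR X Y < 1).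
Proof.
move=> nz; have N0 := nrm_gt0 nz.
have ht : tR X Y * (`|X| + `|Y|) = X by rewrite /tR divfK // gt_eqF.
move: nz N0 ht; rewrite /upR; set t := tR X Y.
sgc X hX; sgc Y hY => //= _ N0 ht; split => // _; apply/andP; split; nra.
Qed.

Lemma divlt (a b N1 N2 : R) : 0 < N1 -> 0 < N2 -> (a / N2 < b / N1) = (a * N1 < b * N2).
Proof. move=> h1 h2; by rewrite ltr_pdivlMr // mulrAC ltr_pdivrMr. Qed.

Lemma UU X1 Y1 X2 Y2 : (X1 != 0) || (Y1 != 0) -> (X2 != 0) || (Y2 != 0) ->
  upR X1 Y1 -> upR X2 Y2 ->
  ((0 < X1 * Y2 - Y1 * X2) = (tR X2 Y2 < tR X1 Y1)) /\
  ((X1 * Y2 - Y1 * X2 < 0) = (tR X1 Y1 < tR X2 Y2)).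
Proof.
move=> nz1 nz2; have N1 := nrm_gt0 nz1; have N2 := nrm_gt0 nz2.
rewrite /tR !divlt //.
move: nz1 nz2 N1 N2; rewrite /upR.
sgc X1 h1; sgc Y1 g1 => //= _; sgc X2 h2; sgc Y2 g2 => //= _ N1 N2 _ _;
  split; apply/idP/idP => H; nra.
Qed.

Lemma nzN X Y : (X != 0) || (Y != 0) -> (- X != 0) || (- Y != 0).
Proof. by rewrite !oppr_eq0. Qed.
Lemma tRN X Y : tR (- X) (- Y) = - tR X Y.
Proof. by rewrite /tR !normrN mulNr. Qed.
Lemma upRN X Y : (X != 0) || (Y != 0) -> upR (- X) (- Y) = ~~ upR X Y.
Proof.
rewrite /upR !oppr_gt0 oppr_eq0.
sgc X hX; sgc Y hY => //= _; by rewrite ?oppr_lt0 ?hX ?(lt_gtF hX) ?ltxx ?lt_gtF.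
Qed.

Lemma lawR X1 Y1 X2 Y2 : (X1 != 0) || (Y1 != 0) -> (X2 != 0) || (Y2 != 0) ->
  (angR X1 Y1 < angR X2 Y2 ->
     ((0 < X1 * Y2 - Y1 * X2) = (angR X2 Y2 - angR X1 Y1 < 2)) /\
     ((X1 * Y2 - Y1 * X2 < 0) = (2 < angR X2 Y2 - angR X1 Y1))) /\
  (angR X1 Y1 = angR X2 Y2 -> X1 * Y2 - Y1 * X2 = 0).
Proof.
move=> nz1 nz2.
have [B1 B1'] := t_bounds nz1; have [B2 B2'] := t_bounds nz2.
have [C1 C1'] := t_bounds (nzN nz1); have [C2 C2'] := t_bounds (nzN nz2).
rewrite /angR.
case u1: (upR X1 Y1); case u2: (upR X2 Y2).
- have [E1 E2] := UU nz1 nz2 u1 u2.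
  have /andP[b1 b1'] := B1 u1; have /andP[b2 b2'] := B2 u2.
  split.
    move=> a; rewrite E1 E2; split; apply/idP/idP => h; lra.
  move=> a; have n1 : ~~ (0 < X1 * Y2 - Y1 * X2) by rewrite E1; apply/negP => h; lra.
  have n2 : ~~ (X1 * Y2 - Y1 * X2 < 0) by rewrite E2; apply/negP => h; lra.
  move: n1 n2; rewrite -!leNgt; lra.
- have u2' : upR (- X2) (- Y2) by rewrite upRN // u2.
  have [E1 E2] := UU nz1 (nzN nz2) u1 u2'.
  rewrite tRN in E1 E2.
  have /andP[b1 b1'] := B1 u1; have /andP[b2 b2'] := B2' (negbT u2).
  have ed : X1 * - Y2 - Y1 * - X2 = - (X1 * Y2 - Y1 * X2) by ring.
  rewrite ed oppr_gt0 oppr_lt0 in E1 E2.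
  split.
    move=> a; rewrite E1 E2; split; apply/idP/idP => h; lra.
  move=> a; lra.
- have /andP[b1 b1'] := B1' (negbT u1); have /andP[b2 b2'] := B2 u2.
  split => a; lra.
- have u1' : upR (- X1) (- Y1) by rewrite upRN // u1.
  have u2' : upR (- X2) (- Y2) by rewrite upRN // u2.
  have [E1 E2] := UU (nzN nz1) (nzN nz2) u1' u2'.
  rewrite !tRN in E1 E2.
  have /andP[b1 b1'] := B1' (negbT u1); have /andP[b2 b2'] := B2' (negbT u2).
  have ed : - X1 * - Y2 - - Y1 * - X2 = X1 * Y2 - Y1 * X2 by ring.
  rewrite ed in E1 E2.
  split.
    move=> a; rewrite E1 E2; split; apply/idP/idP => h; lra.
  move=> a; have n1 : ~~ (0 < X1 * Y2 - Y1 * X2) by rewrite E1; apply/negP => h; lra.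
  have n2 : ~~ (X1 * Y2 - Y1 * X2 < 0) by rewrite E2; apply/negP => h; lra.
  move: n1 n2; rewrite -!leNgt; lra.
Qed.
End Ang.


Section Shift.
Variable R : realFieldType.
Implicit Types a b c p q x y : point R.

Definition ang p x : R := angR (x.1 - p.1) (x.2 - p.2).

Lemma nz_of p x : x != p -> (x.1 - p.1 != 0) || (x.2 - p.2 != 0).
Proof.
move=> xp; rewrite -negb_and; apply/negP => /andP [/eqP h1 /eqP h2].
move/eqP: xp; apply; rewrite [x]surjective_pairing [p]surjective_pairing.
by congr pair; lra.
Qed.

Lemma ang_law p : law (ang p) p.
Proof.
move=> x y xp yp; exact: (lawR (nz_of xp) (nz_of yp)).
Qed.

Lemma ang_range p x : x != p -> 0 <= ang p x < 4.
Proof.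
move=> xp; have [B B'] := t_bounds (nz_of xp).
rewrite /ang /angR; case u: (upR _ _).
  have /andP [h1 h2] := B u; apply/andP; split; lra.
have /andP [h1 h2] := B' (negbT u); apply/andP; split; lra.
Qed.

Lemma ang_up p x : x != p -> upR (x.1 - p.1) (x.2 - p.2) -> ang p x < 2.
Proof.
move=> xp u; have [B _] := t_bounds (nz_of xp).
rewrite /ang /angR u; have /andP [h1 h2] := B u; lra.
Qed.

Definition shift (be : point R -> R) (c : R) x : R :=
  if 0 <= be x - c then be x - c else be x - c + 4.

Section S.
Variables (be : point R -> R) (p : point R) (c : R).
Hypotheses (L : law be p) (Rg : forall x, x != p -> 0 <= be x < 4) (Hc : 0 <= c < 4).

Lemma shift_range x : x != p -> 0 <= shift be c x < 4.
Proof.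
move=> xp; have /andP[c1 c2] := Hc; have := Rg xp; rewrite /shift; case: (lerP 0 (be x - c)) => h /andP [h1 h2]; apply/andP; split; lra.
Qed.

Lemma shift_law : law (shift be c) p.
Proof.
move=> x y xp yp.
have /andP[c1 c2] := Hc; have := Rg xp; have := Rg yp; move=> /andP [y1 y2] /andP [x1 x2].
rewrite /shift.
case: (lerP 0 (be x - c)) => hx; case: (lerP 0 (be y - c)) => hy.
- have [A B] := L xp yp; split.
    move=> a; have a' : be x < be y by lra.
    have [A1 A2] := A a'; rewrite A1 A2.
    by split; congr (_ < _); ring.
  move=> e; apply: B; lra.
- split; last by move=> e; lra.
  move=> _.
  case: (ltrgtP (be y) (be x)) => yx; last first.
  + lra.
  + lra.
  have [A1 _] := L yp xp.
  have [C1 C2] := A1 yx.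
  rewrite det3_swap oppr_gt0 oppr_lt0 C1 C2.
  split; apply/idP/idP => h; lra.
- split.
    move=> a; lra.
  move=> e; lra.
- have [A B] := L xp yp; split.
    move=> a; have a' : be x < be y by lra.
    have [A1 A2] := A a'; rewrite A1 A2.
    by split; congr (_ < _); ring.
  move=> e; apply: B; lra.
Qed.
End S.

Lemma no_big_gap (ga : point R -> R) p a b c : law ga p ->
  a != p -> b != p -> c != p ->
  0 < det3 p a b -> 0 < det3 p b c -> 0 < det3 p c a ->
  0 <= ga a <= 2 -> 0 <= ga b <= 2 -> 0 <= ga c <= 2 -> False.
Proof.
move=> L ap bp cp Dab Dbc Dca /andP[a1 a2] /andP[b1 b2] /andP[c1 c2].
have key u v : u != p -> v != p -> 0 < det3 p u v -> 0 <= ga u <= 2 -> 0 <= ga v <= 2 ->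
    ga u < ga v.
  move=> up vp D /andP[u1 u2] /andP[v1 v2].
  case: (ltrgtP (ga u) (ga v)) => // h.
    have [_ A2] := (L v u vp up).1 h.
    have := A2; rewrite det3_swap oppr_lt0 D => /esym; lra.
  have := (L u v up vp).2 h; lra.
have := key _ _ ap bp Dab; have := key _ _ bp cp Dbc; have := key _ _ cp ap Dca.
rewrite ?a1 ?a2 ?b1 ?b2 ?c1 ?c2 /=.
move=> h1 h2 h3; have := h1 isT isT; have := h2 isT isT; have := h3 isT isT; lra.
Qed.

End Shift.


Section Helpers.
Variable R : realFieldType.
Implicit Types p x y z : point R.

Definition angle_le p := fun x y : point R => ang p x <= ang p y.

Lemma sort_strict p (S Z : seq (point R)) : general_position S -> {subset Z <= S} ->
  p \in S -> p \notin Z -> uniq Z ->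
  forall i j, (i < j < size (sort (angle_le p) Z))%N ->
   ang p (nth p (sort (angle_le p) Z) i) < ang p (nth p (sort (angle_le p) Z) j).
Proof.
move=> G sub pS pZ U i j /andP [ij js].
set Q := sort _ Z in js *.
have so : sorted (angle_le p) Q by apply: sort_sorted => x y; exact: le_total.
have tr : transitive (angle_le p) by move=> y x z; exact: le_trans.
have h : ang p (nth p Q i) <= ang p (nth p Q j).
  by apply: (sorted_ltn_nth tr p so); rewrite ?inE /=; lia.
have UQ : uniq Q by rewrite sort_uniq.
have iQ : (i < size Q)%N by exact: ltn_trans ij js.
have mi : nth p Q i \in Z by rewrite -(mem_sort (angle_le p)) mem_nth.
have mj : nth p Q j \in Z by rewrite -(mem_sort (angle_le p)) mem_nth.
have ne : nth p Q i != nth p Q j by rewrite nth_uniq // neq_ltn ij.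
rewrite lt_neqAle h andbT; apply/eqP => e.
have ip : nth p Q i != p by apply/eqP => e'; move: pZ; rewrite -e' mi.
have jp : nth p Q j != p by apply/eqP => e'; move: pZ; rewrite -e' mj.
have d0 := (ang_law ip jp).2 e.
have := gp_det G pS (sub _ mi) (sub _ mj) (ltac:(by rewrite eq_sym)) ne (ltac:(by rewrite eq_sym)).
by rewrite d0 eqxx.
Qed.

Lemma upR_trans x y z : upR (y.1 - x.1) (y.2 - x.2) -> upR (z.1 - y.1) (z.2 - y.2) ->
  upR (z.1 - x.1) (z.2 - x.2).
Proof.
rewrite /upR => /orP [h1 | /andP [/eqP h1 h2]] /orP [g1 | /andP [/eqP g1 g2]];
  apply/orP; first [ left; lra | right; apply/andP; split; [apply/eqP; lra | lra]].
Qed.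

Lemma upR_tot x y : x != y -> ~~ upR (y.1 - x.1) (y.2 - x.2) -> upR (x.1 - y.1) (x.2 - y.2).
Proof.
move=> xy; rewrite /upR negb_or negb_and -!leNgt => /andP [h1 h2].
apply/orP; case: (ltrgtP x.2 y.2) => e.
- lra.
- by left; lra.
- right; apply/andP; split; first by apply/eqP; lra.
  move: h2; rewrite e subrr eqxx /= => h2.
  case: (ltrgtP x.1 y.1) => f; try lra.
  by move: xy; rewrite [x]surjective_pairing [y]surjective_pairing e f eqxx.
Qed.

Lemma lexmin (S : seq (point R)) : S != [::] ->
  exists2 p, p \in S & forall x, x \in S -> x != p -> upR (x.1 - p.1) (x.2 - p.2).
Proof.
elim: S => [//|a s IH] _.
case: s IH => [|b s] IH.
  by exists a; [rewrite mem_head | move=> x; rewrite inE => /eqP ->; rewrite eqxx].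
have [p' p's H'] := IH isT.
case: (boolP (upR (p'.1 - a.1) (p'.2 - a.2))) => h.
  exists a; first exact: mem_head.
  move=> x; rewrite in_cons => /orP [/eqP -> | xs]; first by rewrite eqxx.
  move=> _; case: (eqVneq x p') => [-> // | xp']; apply: upR_trans h (H' x xs xp').
exists p'; first by rewrite in_cons p's orbT.
move=> x; rewrite in_cons => /orP [/eqP -> ap' | xs xp']; last exact: H'.
exact: upR_tot.
Qed.

Lemma count_colors (red blue s : seq (point R)) : {subset s <= red ++ blue} ->
  (forall x, x \in red -> x \notin blue) ->
  (count (mem red) s + count (mem blue) s = size s)%N.
Proof.
move=> sub disj; elim: s sub => [//|x s IH] sub /=.
have xS : x \in red ++ blue by apply: sub; rewrite mem_head.
rewrite -IH; last by move=> y ys; apply: sub; rewrite in_cons ys orbT.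
move: xS; rewrite mem_cat; case: (boolP (x \in red)) => xr /=.
  by rewrite (negbTE (disj x xr)); lia.
by move=> ->; lia.
Qed.


Lemma modn_wrap i j N : (i < N)%N -> (j < N)%N ->
  ((i + j) %% N = if (i + j < N)%N then i + j else i + j - N)%N.
Proof.
move=> hi hj; case: ifP => h; first by rewrite modn_small.
have -> : (i + j = (i + j - N) + N)%N by move/negbT: h; lia.
rewrite modnDr modn_small //; move/negbT: h; lia.
Qed.

Lemma rot_mono (al : point R -> R) (p : point R) (L : seq (point R)) i :
  (forall a b, (a < b < size L)%N -> al (nth p L a) < al (nth p L b)) ->
  (forall l, (l < size L)%N -> 0 <= al (nth p L l) < 4) ->
  (i < size L)%N ->
  forall j1 j2, (j1 < j2 < size L)%N ->
  shift al (al (nth p L i)) (nth p (rot i L) j1) <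
  shift al (al (nth p L i)) (nth p (rot i L) j2).
Proof.
move=> Hm Hr hi j1 j2 /andP [j12 j2N].
set N := size L in Hm Hr hi j2N *.
set c := al (nth p L i).
have sh l : (l < N)%N -> shift al c (nth p L l) =
    if (i <= l)%N then al (nth p L l) - c else al (nth p L l) - c + 4.
  move=> lN; rewrite /shift; case: (leqP i l) => il.
    have : c <= al (nth p L l).
      rewrite /c; rewrite leq_eqVlt in il; case/orP: il => [/eqP -> // | il].
      by apply: ltW; apply: Hm; rewrite il.
    by move=> h; rewrite subr_ge0 h.
  have : al (nth p L l) < c by apply: Hm; rewrite il hi.
  by move=> h; rewrite subr_ge0 leNgt h.
have j1N : (j1 < N)%N by apply: ltn_trans j12 j2N.
rewrite !nth_rot ?(ltnW hi) // -/N !modn_wrap //.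
have HrA l : (l < N)%N -> 0 <= al (nth p L l) < 4 by exact: Hr.
case: (ltnP (i + j2) N) => h2.
  have h1 : (i + j1 < N)%N by lia.
  rewrite h1 !sh // !leq_addr.
  have := Hm (i + j1)%N (i + j2)%N ltac:(lia); lra.
case: (ltnP (i + j1) N) => h1.
  rewrite /= !sh; try lia.
  rewrite leq_addr.
  have -> : (i <= i + j2 - N)%N = false by apply/negbTE; rewrite -ltnNge; lia.
  have /andP [a0 a4] := HrA _ h1.
  have /andP [b0 b4] := HrA (i + j2 - N)%N ltac:(lia).
  lra.
rewrite /= !sh; try lia.
have -> : (i <= i + j2 - N)%N = false by apply/negbTE; rewrite -ltnNge; lia.
have -> : (i <= i + j1 - N)%N = false by apply/negbTE; rewrite -ltnNge; lia.
have := Hm (i + j1 - N)%N (i + j2 - N)%N ltac:(lia); lra.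
Qed.

Lemma count_remx (T : eqType) (a : pred T) (s : seq T) (x : T) : x \in s ->
  count a s = (a x + count a (rem x s))%N.
Proof. move=> xs; by rewrite (permP (perm_to_rem xs)). Qed.

Lemma mono_le (be : point R -> R) p (L : seq (point R)) :
  (forall a b, (a < b < size L)%N -> be (nth p L a) < be (nth p L b)) ->
  forall a b, (a <= b < size L)%N -> be (nth p L a) <= be (nth p L b).
Proof.
move=> Hm a b /andP [ab bN]; rewrite leq_eqVlt in ab; case/orP: ab => [/eqP -> // | ab].
by apply: ltW; apply: Hm; rewrite ab bN.
Qed.

Lemma gap_bound (be : point R -> R) p (L : seq (point R)) j l :
  (forall a b, (a < b < size L)%N -> be (nth p L a) < be (nth p L b)) ->
  (forall l, (l < size L)%N -> 0 <= be (nth p L l) < 4) ->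
  (j.+1 < size L)%N -> (l < size L)%N ->
  2 <= be (nth p L j.+1) - be (nth p L j) ->
  0 <= shift be (be (nth p L j.+1)) (nth p L l) <= 2.
Proof.
move=> Hm Hr hj hl g.
have /andP [x0 x4] := Hr j (ltnW hj).
have /andP [y0 y4] := Hr _ hj.
have /andP [z0 z4] := Hr _ hl.
rewrite /shift.
case: (leqP l j) => lj.
  have := mono_le Hm (a := l) (b := j) ltac:(rewrite lj (ltnW hj)).
  move=> h; case: (lerP 0 (be (nth p L l) - be (nth p L j.+1))) => h'; apply/andP; split; lra.
have := mono_le Hm (a := j.+1) (b := l) ltac:(rewrite lj hl).
move=> h; case: (lerP 0 (be (nth p L l) - be (nth p L j.+1))) => h'; apply/andP; split; lra.
Qed.

Lemma between (be : point R -> R) p (L : seq (point R)) j l :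
  (forall a b, (a < b < size L)%N -> be (nth p L a) < be (nth p L b)) ->
  (j.+1 < size L)%N -> (l < size L)%N ->
  be (nth p L j) <= be (nth p L l) <= be (nth p L j.+1) -> (l = j) \/ (l = j.+1).
Proof.
move=> Hm hj hl /andP [h1 h2].
case: (ltngtP l j) => lj; last by left.
  have hh : (l < j < size L)%N by rewrite lj (ltnW hj).
  have H := Hm _ _ hh; clear -H h1; exfalso; lra.
case: (ltngtP l j.+1) => lj'; last by right.
  lia.
have hh : (j.+1 < l < size L)%N by rewrite lj' hl.
have H := Hm _ _ hh; clear -H h2; exfalso; lra.
Qed.
End Helpers.

Unset Implicit Arguments. Set Strict Implicit.

Lemma k1_case (R : realFieldType) (red blue : seq (point R)) r b :
  r \in red -> b \in blue -> (forall x, x \in red -> x \notin blue) ->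
  balanced_hole red blue 1 [:: r; b].
Proof.
move=> rr bb disj.
have rb : r != b by apply/eqP => e; move: (disj r rr); rewrite e bb.
have bnr : b \notin red by apply/negP => br; move: (disj b br); rewrite bb.
have rnb : r \notin blue by exact: disj.
split => //.
- split; first by split; [rewrite /= inE rb | left].
  split.
    by move=> x; rewrite !inE => /orP [/eqP -> | /eqP ->]; rewrite mem_cat ?rr ?bb ?orbT.
  move=> q _ _; rewrite /in_interior /vtx /=.
  by rewrite (cr_sym q b r); case: (crosses_ray _ _ _).
- by rewrite /= rr (negbTE bnr).
- by rewrite /= bb (negbTE rnb).
Qed.


Definition tri (R : realFieldType) (s a b c : point R) : bool :=
  (s != a) && (s != b) && (s != c) && (a != b) && (b != c) && (a != c) &&
  (0 < det3 a b c) && (0 <= det3 a b s) && (0 <= det3 b c s) && (0 <= det3 c a s).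
Arguments tri {R}.

Lemma lt2 (R : realFieldType) (a b : R) : b < 2 -> 0 <= a -> b - a < 2.
Proof. move=> *; lra. Qed.

Lemma count_all (T : eqType) (a : pred T) (s : seq T) : all a s -> count a s = size s.
Proof. by rewrite all_count => /eqP. Qed.
Lemma count_none (T : eqType) (a : pred T) (s : seq T) :
  (forall x, x \in s -> ~~ a x) -> count a s = 0%N.
Proof. move=> h; apply/eqP; rewrite -leqn0 leqNgt -has_count; exact/hasPn. Qed.

Lemma ar_low n k (r : bool) : (1 < k)%N -> (k <= n)%N ->
  ((2 * n - 1) * (k - r - 1) < (2 * k - 1) * (n - r))%N.
Proof. case: r => /= h1 h2.
- have -> : (k - 1 - 1 = k - 2)%N by lia.
  have -> : (2 * n - 1 = (2 * n - 2) + 1)%N by lia.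
  nia.
- nia.
Qed.
Lemma ar_high n k (r : bool) : (1 < k)%N -> (k <= n)%N ->
  ((2 * k - 1) * (n - r) < (2 * n - 1) * (k - r + 1))%N.
Proof. case: r => /= h1 h2; nia. Qed.
Lemma ar_red k (r : bool) : (0 < k)%N -> (r + (k - r) = k)%N.
Proof. case: r => /=; lia. Qed.
Lemma ar_blue k (r b : bool) u : (0 < k)%N -> (r + b = 1)%N ->
  ((k - r) + u = 2 * k - 1)%N -> (b + u = k)%N.
Proof. case: r; case: b => /=; lia. Qed.
Lemma ar_cnt n (r : bool) X : (n = r + X)%N -> X = (n - r)%N.
Proof. lia. Qed.
Lemma ar_step1 T x : (x < T)%N -> (x <= T - 1)%N.
Proof. lia. Qed.
Lemma ar_step2 T x : (T < x)%N -> (T + 1 <= x)%N.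
Proof. lia. Qed.
Lemma ar_e2k k : (1 < k)%N -> ((2 * k - 1).+1 = 2 * k)%N.
Proof. lia. Qed.
Lemma ar_m2 k : (1 < k)%N -> (2 <= 2 * k - 1)%N.
Proof. lia. Qed.

Section Common.
Set Implicit Arguments. Unset Strict Implicit.
Variables (R : realFieldType) (n k : nat) (red blue : seq (point R)).
Hypotheses (n1 : (1 <= n)%N) (k2 : (1 < k)%N) (kn : (k <= n)%N)
  (ur : uniq red) (ub : uniq blue) (sr : size red = n) (sb : size blue = n)
  (disj : forall x, x \in red -> x \notin blue) (G : general_position (red ++ blue)).

Let S := red ++ blue.

Lemma uS : uniq S.
Proof.
rewrite cat_uniq ur ub andbT /=; apply/hasPn => x xb; apply/negP => xr.
by move: (disj xr); rewrite xb.
Qed.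

Lemma sS : size S = (2 * n)%N.
Proof. by rewrite size_cat sr sb; lia. Qed.

Lemma pcol p : p \in S -> ((p \in red) + (p \in blue) = 1)%N.
Proof.
rewrite mem_cat; case: (boolP (p \in red)) => h /=.
  by rewrite (negbTE (disj h)).
by move=> ->.
Qed.

Lemma remP (s : seq (point R)) p x : uniq s -> (x \in rem p s) = (x != p) && (x \in s).
Proof. by move=> u; rewrite (mem_rem_uniq p u) inE. Qed.

Lemma size_remc (s : seq (point R)) p : size (rem p s) = (size s - (p \in s))%N.
Proof.
case: (boolP (p \in s)) => h; first by rewrite size_rem //= subn1.
by rewrite rem_id //= subn0.
Qed.

Lemma case2 : (forall s a b c, s \in S -> a \in S -> b \in S -> c \in S -> tri s a b c -> False) ->
  exists P : seq (point R), balanced_hole red blue k P.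
Proof.
move=> NT.
have e2k : ((2 * k - 1).+1 = 2 * k)%N by lia.
have k22 : (2 <= 2 * k - 1)%N by lia.
have Sne : S != [::] by rewrite -size_eq0 sS; lia.
have [p pS pmin] := lexmin Sne.
have pc := pcol pS.
set r := (k - (p \in red))%N.
set b := (k - (p \in blue))%N.
set Z := take r (rem p red) ++ take b (rem p blue).
have szr : size (rem p red) = (n - (p \in red))%N by rewrite size_remc sr.
have szb : size (rem p blue) = (n - (p \in blue))%N by rewrite size_remc sb.
have sZ : size Z = (2 * k - 1)%N.
  rewrite size_cat !size_takel; [lia | rewrite szb; lia | rewrite szr; lia].
have ZS : {subset Z <= S}.
  move=> x; rewrite mem_cat => /orP [/mem_take | /mem_take].
    by rewrite remP // => /andP [_ xr]; rewrite mem_cat xr.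
  by rewrite remP // => /andP [_ xb]; rewrite mem_cat xb orbT.
have pZ : p \notin Z.
  rewrite mem_cat negb_or; apply/andP; split; apply/negP => /mem_take; rewrite remP // eqxx //.
have uZ : uniq Z.
  rewrite cat_uniq !take_uniq ?rem_uniq //= andbT; apply/hasPn => x /mem_take.
  rewrite remP // => /andP [_ xb]; apply/negP => /mem_take; rewrite remP // => /andP [_ xr].
  by move: (disj xr); rewrite xb.
set Q := sort (angle_le p) Z.
have sQ : size Q = (2 * k - 1)%N by rewrite size_sort.
have mQ x : (x \in Q) = (x \in Z) by rewrite mem_sort.
have uQ : uniq Q by rewrite sort_uniq.
have pQ : perm_eq Q Z by rewrite perm_sort.
have mono := sort_strict G ZS pS pZ uZ; rewrite -/Q in mono.
have nthZ i : (i < size Q)%N -> nth p Q i \in Z by move=> h; rewrite -mQ mem_nth.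
have nthp i : (i < size Q)%N -> nth p Q i != p.
  by move=> h; apply/eqP => e; move: pZ; rewrite -e nthZ.
have ccw i : (i.+1 < size Q)%N -> 0 < det3 p (nth p Q i) (nth p Q i.+1).
  move=> h.
  have xp := nthp i (ltnW h); have yp := nthp i.+1 h.
  have lt : ang p (nth p Q i) < ang p (nth p Q i.+1) by apply: mono; rewrite ltnSn h.
  have [A1 _] := (ang_law xp yp).1 lt.
  rewrite A1.
  have y2 := ang_up yp (pmin _ (ZS _ (nthZ _ h)) yp).
  have /andP [x0 _] := ang_range xp.
  exact: lt2 y2 x0.
exists (p :: Q); split.
- by rewrite /= sQ e2k.
- apply: (fan_hole (be := ang p)).
  + by rewrite sQ.
  + by rewrite /= uQ andbT mQ.
  + by move=> x; rewrite inE => /orP [/eqP -> // | ]; rewrite mQ; apply: ZS.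
  + exact: G.
  + exact: ang_law.
  + exact: mono.
  + exact: ccw.
  + move=> s0 s0S s0n i hi [h1 h2 h3].
    have xS := ZS _ (nthZ i (ltnW hi)); have yS := ZS _ (nthZ i.+1 hi).
    apply: (NT s0 p (nth p Q i) (nth p Q i.+1) s0S pS xS yS).
    move: s0n; rewrite inE negb_or => /andP [s0p s0Q].
    have s0x : s0 != nth p Q i by apply/eqP => e; move: s0Q; rewrite e mem_nth // (ltnW hi).
    have s0y : s0 != nth p Q i.+1 by apply/eqP => e; move: s0Q; rewrite e mem_nth.
    have xy : nth p Q i != nth p Q i.+1 by rewrite nth_uniq // ?(ltnW hi) // neq_ltn ltnSn.
    rewrite /tri s0p s0x s0y xy h1 h2 h3 ccw //.
    by rewrite (eq_sym p (nth p Q i)) (nthp _ (ltnW hi)) (eq_sym p (nth p Q i.+1)) (nthp _ hi).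
- rewrite /= (permP pQ) count_cat.
  have Cr1 : count (mem red) (take r (rem p red)) = r.
    rewrite count_all ?size_takel ?szr //; first by rewrite /r leq_sub2r.
    by apply/allP => x /mem_take; rewrite remP // => /andP [_ xr].
  have Cr2 : count (mem red) (take b (rem p blue)) = 0%N.
    apply: count_none => x /mem_take; rewrite remP // => /andP [_ xb].
    by apply/negP => xr; move: (disj xr); rewrite xb.
  rewrite Cr1 Cr2 addn0 /r subnKC //; exact: leq_trans (leq_b1 _) (ltnW k2).
- rewrite /= (permP pQ) count_cat.
  have Cr1 : count (mem blue) (take b (rem p blue)) = b.
    rewrite count_all ?size_takel ?szb //; first by rewrite /b leq_sub2r.
    by apply/allP => x /mem_take; rewrite remP // => /andP [_ xr].
  have Cr2 : count (mem blue) (take r (rem p red)) = 0%N.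
    apply: count_none => x /mem_take; rewrite remP // => /andP [_ xr].
    exact: disj.
  rewrite Cr1 Cr2 add0n /b subnKC //; exact: leq_trans (leq_b1 _) (ltnW k2).
Qed.


Lemma case1 p a b c : p \in S -> a \in S -> b \in S -> c \in S -> tri p a b c ->
  exists P : seq (point R), balanced_hole red blue k P.
Proof.
move=> pS aS bS cS.
rewrite /tri => /andP [/andP [/andP [/andP [/andP [/andP [/andP [/andP [/andP
  [pa pb] pc] ab] bc] ac] D] h1] h2] h3].
have pcl := pcol pS.
have mN : (2 * k - 1 <= 2 * n - 1)%N by rewrite leq_sub2r // leq_mul2l kn orbT.
have m2 : (2 <= 2 * k - 1)%N by apply: ar_m2.
have hlow := @ar_low n k (p \in red) k2 kn.
have hhigh := @ar_high n k (p \in red) k2 kn.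
have k0 : (0 < k)%N by apply: ltnW.
have fin_red := @ar_red k (p \in red) k0.
have fin_blue u := @ar_blue k (p \in red) (p \in blue) u k0 pcl.
have nab : det3 a b p != 0 by apply: (gp_det G aS bS pS ab); rewrite eq_sym ?pa ?pb.
have nbc : det3 b c p != 0 by apply: (gp_det G bS cS pS bc); rewrite eq_sym ?pb ?pc.
have nca : det3 c a p != 0 by apply: (gp_det G cS aS pS); rewrite eq_sym ?pa ?pc ?ac.
have Dab : 0 < det3 p a b by rewrite det3_cyc lt_neqAle eq_sym nab h1.
have Dbc : 0 < det3 p b c by rewrite det3_cyc lt_neqAle eq_sym nbc h2.
have Dca : 0 < det3 p c a by rewrite det3_cyc lt_neqAle eq_sym nca h3.
have ap : a != p by rewrite eq_sym.
have bp : b != p by rewrite eq_sym.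
have cp : c != p by rewrite eq_sym.
set L := sort (angle_le p) (rem p S).
have remS x : (x \in rem p S) = (x != p) && (x \in S) by apply: remP; exact: uS.
have mL x : (x \in L) = (x != p) && (x \in S) by rewrite mem_sort remS.
have sL : size L = (2 * n - 1)%N by rewrite size_sort size_rem // sS subn1.
have uL : uniq L by rewrite sort_uniq rem_uniq // uS.
have subR : {subset rem p S <= S} by move=> x; rewrite remS => /andP [].
have pR : p \notin rem p S by rewrite remS eqxx.
have monoA := sort_strict G subR pS pR (rem_uniq p uS); rewrite -/L in monoA.
have nthL l : (l < size L)%N -> nth p L l != p.
  by move=> hl; have := mem_nth p hl; rewrite mL => /andP [].
have rangeA l : (l < size L)%N -> 0 <= ang p (nth p L l) < 4.
  by move=> hl; apply: ang_range; apply: nthL.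
have cntS : count (mem red) S = n.
  rewrite count_cat count_all; last by apply/allP => x xr.
  rewrite count_none ?addn0 //; move=> x xb; apply/negP => xr; by move: (disj xr); rewrite xb.
have cntL : count (mem red) L = (n - (p \in red))%N.
  have pL : perm_eq L (rem p S) by rewrite perm_sort.
  by rewrite (permP pL); apply: ar_cnt; rewrite -{1}cntS (count_remx _ pS).
set f := fun i => count (mem red) (take (2 * k - 1) (rot i L)).
have mNL : (2 * k - 1 <= size L)%N by rewrite sL.
have sum := sum_windows p (mem red) mNL; rewrite -/f cntL in sum.
have [i0 i0N fi0] : exists2 i0, (i0 < size L)%N & (k - (p \in red) <= f i0)%N.
  case: (boolP [exists i : 'I_(size L), (k - (p \in red) <= f i)%N]).
    by case/existsP => i hi; exists i.
  rewrite negb_exists => /forallP H.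
  have : (\sum_(i < size L) f i <= \sum_(i < size L) (k - (p \in red) - 1))%N.
    apply: leq_sum => i _; have := H i; rewrite -ltnNge; exact: ar_step1.
  by rewrite sum sum_nat_const card_ord sL => /(leq_trans hlow); rewrite ltnn.
have [i1 i1N fi1] : exists2 i1, (i1 < size L)%N & (f i1 <= k - (p \in red))%N.
  case: (boolP [exists i : 'I_(size L), (f i <= k - (p \in red))%N]).
    by case/existsP => i hi; exists i.
  rewrite negb_exists => /forallP H.
  have : (\sum_(i < size L) (k - (p \in red) + 1) <= \sum_(i < size L) f i)%N.
    apply: leq_sum => i _; have := H i; rewrite -ltnNge; exact: ar_step2.
  by rewrite sum sum_nat_const card_ord sL => /(leq_trans hhigh); rewrite ltnn.
have step j : (j.+1 < size L)%N -> (f j.+1 <= (f j).+1 /\ f j <= (f j.+1).+1)%N.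
  move=> hj; have e : rot j.+1 L = rot 1 (rot j L) by rewrite -add1n rotD // add1n ltnW.
  rewrite /f e.
  apply: count_take_rot1; rewrite size_rot mNL andbT; exact: leq_trans _ m2.
have [i iN fi] : exists2 i, (i < size L)%N & f i = (k - (p \in red))%N.
  case: (leqP i1 i0) => h.
    apply: (ivt step (d := (i0 - i1)%N) (a := i1)); first by rewrite subnKC.
    by rewrite subnKC // fi1 fi0.
  apply: (ivt step (d := (i1 - i0)%N) (a := i0)); first by rewrite subnKC // ltnW.
  by rewrite subnKC ?fi1 ?fi0 ?orbT // ltnW.
set c0 := ang p (nth p L i).
have c0r : 0 <= c0 < 4 by apply: rangeA.
have Rang : forall x, x != p -> 0 <= ang p x < 4 by move=> x; exact: ang_range.
have Lbe := shift_law (@ang_law _ p) Rang c0r.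
have Rbe := shift_range Rang c0r.
set be := shift (ang p) c0 in Lbe Rbe.
set L' := rot i L.
have sL' : size L' = size L by rewrite size_rot.
have mL' x : (x \in L') = (x \in L) by rewrite mem_rot.
have monoB : forall j1 j2, (j1 < j2 < size L')%N -> be (nth p L' j1) < be (nth p L' j2).
  by move=> j1 j2; rewrite sL'; exact: (rot_mono monoA rangeA iN).
have nthL' l : (l < size L')%N -> nth p L' l != p.
  by move=> hl; have := mem_nth p hl; rewrite mL' mL => /andP [].
have rangeB l : (l < size L')%N -> 0 <= be (nth p L' l) < 4.
  by move=> hl; apply: Rbe; apply: nthL'.
have uL' : uniq L' by rewrite rot_uniq.
have mQL : (2 * k - 1 <= size L')%N by rewrite sL'.
have fQ : f i = count (mem red) (take (2 * k - 1) L') by [].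
set Q := take (2 * k - 1) L' in fQ.
have sQ : size Q = (2 * k - 1)%N by rewrite size_takel.
have QL : (size Q <= size L')%N by rewrite sQ.
have nthQ j : (j < size Q)%N -> nth p Q j = nth p L' j by rewrite sQ => h; rewrite nth_take.
have uQ : uniq Q by rewrite take_uniq.
have pQ : p \notin Q by apply/negP => /mem_take; rewrite mL' mL eqxx.
have QS : {subset Q <= S} by move=> x /mem_take; rewrite mL' mL => /andP [].
have ccwQ j : (j.+1 < size Q)%N -> 0 < det3 p (nth p L' j) (nth p L' j.+1).
  move=> hj.
  have hjL : (j.+1 < size L')%N by apply: leq_trans hj QL.
  have xp := nthL' j (ltnW hjL); have yp := nthL' j.+1 hjL.
  have lt : be (nth p L' j) < be (nth p L' j.+1) by apply: monoB; rewrite ltnSn hjL.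
  have [A1 _] := (Lbe _ _ xp yp).1 lt.
  rewrite A1 ltNge; apply/negP => g.
  have Lga := shift_law Lbe Rbe (rangeB j.+1 hjL).
  have gb z : z \in S -> z != p ->
      0 <= shift be (be (nth p L' j.+1)) z <= 2.
    move=> zS zp; have zL : z \in L' by rewrite mL' mL zp zS.
    rewrite -(nth_index p zL); apply: gap_bound monoB rangeB hjL _ g.
    by rewrite index_mem.
  exact: (no_big_gap Lga ap bp cp Dab Dbc Dca (gb a aS ap) (gb b bS bp) (gb c cS cp)).
exists (p :: Q); split.
- by rewrite /= sQ; apply: ar_e2k.
- apply: (fan_hole (be := be)).
  + by rewrite sQ.
  + by rewrite /= pQ uQ.
  + by move=> x; rewrite inE => /orP [/eqP -> // | ]; apply: QS.
  + exact: G.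
  + exact: Lbe.
  + move=> i' j' /andP [ij jQ]; rewrite !nthQ //; last by apply: ltn_trans ij jQ.
    by apply: monoB; rewrite ij (leq_trans jQ QL).
  + by move=> j hj; rewrite !nthQ // ?(ltnW hj) //; apply: ccwQ.
  + move=> s0 s0S s0n j hj [e1 e2 e3].
    rewrite !nthQ ?(ltnW hj) // in e1 e2 e3.
    move: s0n; rewrite inE negb_or => /andP [s0p s0Q].
    have s0L : s0 \in L' by rewrite mL' mL s0p s0S.
    have hjL : (j.+1 < size L')%N by apply: leq_trans hj QL.
    have xp := nthL' j (ltnW hjL); have yp := nthL' j.+1 hjL.
    have lt : be (nth p L' j) < be (nth p L' j.+1) by apply: monoB; rewrite ltnSn hjL.
    rewrite det3_cyc in e3.
    have w := wedge Lbe xp yp s0p lt (ccwQ j hj) e1 e3.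
    rewrite -(nth_index p s0L) in w.
    have iL : (index s0 L' < size L')%N by rewrite index_mem.
    case: (between monoB hjL iL w) => e.
      by move: s0Q; rewrite -(nth_index p s0L) e -nthQ ?(ltnW hj) // mem_nth // ltnW.
    by move: s0Q; rewrite -(nth_index p s0L) e -nthQ // mem_nth.
- by rewrite /= -fQ fi.
- rewrite /=; apply: fin_blue.
  have := count_colors QS disj; rewrite -fQ fi sQ; exact.
Qed.

End Common.

Theorem proposition2 (R : realFieldType) (n k : nat) (red blue : seq (point R)) :
  (1 <= n)%N -> (1 <= k <= n)%N ->
  uniq red -> uniq blue -> size red = n -> size blue = n ->
  (forall x, x \in red -> x \notin blue) ->
  general_position (red ++ blue) ->
  exists P : seq (point R), balanced_hole red blue k P.
Proof.
move=> n1 /andP [k1 kn] ur ub sr sb disj G.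
set S := red ++ blue.
have uS : uniq S.
  rewrite cat_uniq ur ub andbT /=; apply/hasPn => x xb; apply/negP => xr.
  by move: (disj x xr); rewrite xb.
have sS : size S = (2 * n)%N by rewrite size_cat sr sb; lia.
case: (ltnP 1 k) => k2; last first.
  have -> : k = 1%N by lia.
  case: red ur sr disj G S uS sS => [|r red'] //=; first by move=> _ e; lia.
  case: blue ub sb => [|b blue'] //=; first by move=> _ e; lia.
  move=> _ _ _ _ disj _ _ _ _; exists [:: r; b]; apply: k1_case => //; exact: mem_head.
case: (boolP (has (fun p => has (fun a => has (fun b => has (fun c => tri p a b c) S) S) S) S)) => Hc.
  case/hasP: Hc => p pS /hasP [a aS /hasP [b bS /hasP [c cS t]]].
  exact: (case1 n1 k2 kn ur ub sr sb disj G pS aS bS cS t).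
apply: (case2 n1 k2 kn ur ub sr sb disj G) => s a b c s0S aS bS cS t.
move/hasPn: Hc => /(_ s s0S) /hasPn /(_ a aS) /hasPn /(_ b bS) /hasPn /(_ c cS).
by rewrite t.
Qed.
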